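(* In the setting of the context (in any of the cases for the sign of $\partial_v r_-$), every radially outgoing null geodesic that is initially located outside or on the outer AH never intersects the outer AH at any later time, and reaches future null infinity, i.e. $x(v)\to\infty$ as $v\to\infty$.
   Context: Spherically symmetric spacetime $ds^2=-f(v,r)A(v,r)^2dv^2+2A(v,r)\,dr\,dv+r^2d\Omega^2$ with $A>0$, $f,A\to1$ as $r\to\infty$, $f(v,0)=1$, $\partial_rf(v,0)=\partial_rA(v,0)=0$; $f(v,\cdot)$ has exactly two zeros $r_+(v)>r_-(v)$ (outer/inner apparent horizons, AHs), $f=F(r-r_+)(r-r_-)$ with $F>0$, and $h=AF>0$. Assumptions: $\partial_v r_+<0$; $r_\pm(v)\to r_c$ as $v\to\infty$; the sign of $\partial_v r_-$ is constant; the $v\to\infty$ limits of $A,F,h$ behave as analytic functions of $r$, so all $\partial_r^n h$ converge as $v\to\infty$ (write $h(\infty,x)$ for the limit). With $x=r-r_c$, $x_\pm=r_\pm-r_c$ and $h$ regarded as a function of $(v,x)$, radially outgoing null geodesics are the solutions of $dx/dv=\tfrac12h(v,x)(x-x_+(v))(x-x_-(v))$. *)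

(* Defs.v *)
From Stdlib Require Import Reals.
From Coquelicot Require Import Coquelicot.
Open Scope R_scope.

Definition fmet (F : R -> R -> R) (rp rm : R -> R) (v r : R) : R :=
  F v r * (r - rp v) * (r - rm v).

Definition hfun (A F : R -> R -> R) (rc v x : R) : R :=
  A v (x + rc) * F v (x + rc).

(* Main.v *)
From Stdlib Require Import Reals Lra Classical.
From Coquelicot Require Import Coquelicot.
Open Scope R_scope.

Lemma deriv_approx f t l : is_derive f t l -> forall eps, 0 < eps ->
  exists d, 0 < d /\ forall h, Rabs h < d -> Rabs (f (t+h) - f t - l*h) <= eps * Rabs h.
Proof.
  intros H eps He. apply is_derive_Reals in H.
  destruct (H eps He) as [d Hd]. exists d. split; [apply cond_pos|].
  intros h Hh. destruct (Req_dec h 0) as [->|Hn].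
  - rewrite Rplus_0_r. replace (f t - f t - l*0) with 0 by ring.
    rewrite Rabs_R0. lra.
  - specialize (Hd h Hn Hh).
    replace (f (t+h) - f t - l*h) with (h * ((f (t+h) - f t)/h - l)) by (field; auto).
    rewrite Rabs_mult. rewrite (Rmult_comm eps). apply Rmult_le_compat_l.
    apply Rabs_pos. lra.
Qed.

Lemma deriv_cont f t l : is_derive f t l -> continuity_pt f t.
Proof.
  intros H. apply continuity_pt_filterlim.
  apply (ex_derive_continuous (K:=R_AbsRing) (V:=R_NormedModule)).
  exists l. exact H.
Qed.

Lemma mvt f df a b : a <= b -> (forall t, a <= t <= b -> is_derive f t (df t)) ->
  exists c, a <= c <= b /\ f b - f a = df c * (b - a).
Proof.
  intros Hab Hd.
  destruct (MVT_gen f a b df) as [c [Hc He]].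
  - intros t Ht. rewrite Rmin_left in Ht by lra. rewrite Rmax_right in Ht by lra.
    apply Hd; lra.
  - intros t Ht. rewrite Rmin_left in Ht by lra. rewrite Rmax_right in Ht by lra.
    apply (deriv_cont f t (df t)). apply Hd; lra.
  - exists c. rewrite Rmin_left in Hc by lra. rewrite Rmax_right in Hc by lra. auto.
Qed.

Lemma cont_eps f t : continuity_pt f t -> forall eps, 0 < eps ->
  exists d, 0 < d /\ forall s, Rabs (s - t) < d -> Rabs (f s - f t) < eps.
Proof.
  intros H eps He. destruct (H eps He) as [d [Hd Hs]]. exists d; split; auto.
  intros s Hs'. destruct (Req_dec s t) as [->|Hn].
  - rewrite Rminus_eq_0, Rabs_R0; auto.
  - apply (Hs s). split. split. exact I. auto. exact Hs'.
Qed.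

Lemma ex_deriv_cont f t : ex_derive f t -> continuity_pt f t.
Proof. intros [l H]. exact (deriv_cont f t l H). Qed.
Require Import Defs.
Theorem lemma1
  (A F : R -> R -> R) (rp rm : R -> R) (rc : R) (hinf : R -> R)
  (* smoothness in r of A and F *)
  (HAsm : forall v n r, ex_derive_n (fun s => A v s) n r)
  (HFsm : forall v n r, ex_derive_n (fun s => F v s) n r)
  (* positivity *)
  (HApos : forall v r, 0 <= r -> 0 < A v r)
  (HFpos : forall v r, 0 <= r -> 0 < F v r)
  (* exactly two apparent horizons 0 < r_- < r_+ *)
  (Hrm : forall v, 0 < rm v)
  (Hrmp : forall v, rm v < rp v)
  (* asymptotics as r -> oo *)
  (HfInf : forall v, is_lim (fun r => fmet F rp rm v r) p_infty 1)
  (HAInf : forall v, is_lim (fun r => A v r) p_infty 1)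
  (* regularity at the center *)
  (Hf0 : forall v, fmet F rp rm v 0 = 1)
  (Hf0' : forall v, is_derive (fun r => fmet F rp rm v r) 0 0)
  (HA0' : forall v, is_derive (fun r => A v r) 0 0)
  (* d r_+/dv < 0 *)
  (Hrpd : forall v, ex_derive rp v /\ Derive rp v < 0)
  (* r_+-, r_- -> r_c as v -> oo *)
  (Hrplim : is_lim rp p_infty rc)
  (Hrmlim : is_lim rm p_infty rc)
  (* the sign of d r_-/dv is constant *)
  (Hrmd : forall v, ex_derive rm v)
  (Hrmsign : (forall v, 0 < Derive rm v) \/ (forall v, Derive rm v = 0)
             \/ (forall v, Derive rm v < 0))
  (* v -> oo limit of h: all r-derivatives converge ... *)
  (HhlimN : forall n x,
      is_lim (fun v => Derive_n (fun y => hfun A F rc v y) n x) p_infty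
             (Derive_n hinf n x))
  (* ... locally uniformly (the limit behaves as an analytic function) *)
  (Hhunif : forall a b eps, 0 < eps -> exists V, forall v x,
      V <= v -> a <= x <= b -> Rabs (hfun A F rc v x - hinf x) < eps)
  (* the limit h(oo, x) is still positive in the region r > 0 *)
  (Hhinfpos : forall x, - rc < x -> 0 < hinf x)
  (* a radially outgoing null geodesic x(v), v >= v0 *)
  (x : R -> R) (v0 : R)
  (Hgeo : forall v, v0 <= v ->
      is_derive x v
        (/ 2 * hfun A F rc v (x v) * (x v - (rp v - rc)) * (x v - (rm v - rc))))
  (* initially outside or on the outer AH *)
  (Hinit : rp v0 - rc <= x v0) :
  (forall v, v0 < v -> rp v - rc < x v) /\ is_lim x p_infty p_infty.
Proof.
  assert (Hhpos : forall v y, 0 <= y + rc -> 0 < hfun A F rc v y).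
  { intros v y Hy. unfold hfun. apply Rmult_lt_0_compat; auto. }
  set (g := fun v => / 2 * hfun A F rc v (x v) * (x v - (rp v - rc)) * (x v - (rm v - rc))).
  set (D := fun v => x v - (rp v - rc)).
  assert (HD : forall v, v0 <= v -> is_derive D v (g v - Derive rp v)).
  { intros v Hv. unfold D. apply (is_derive_minus x (fun v => rp v - rc)).
    apply Hgeo; auto.
    replace (Derive rp v) with (Derive rp v - 0) by ring.
    apply (is_derive_minus rp (fun _ => rc)). apply Derive_correct, Hrpd.
    exact (is_derive_const (K:=R_AbsRing) (V:=R_NormedModule) rc v). }
  assert (Hext : forall t, v0 <= t -> 0 <= D t ->
            exists d, 0 < d /\ forall s, t < s < t + d -> 0 < D s).
  { intros t Ht HDt. set (l := g t - Derive rp t).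
    destruct (Rle_lt_or_eq_dec _ _ HDt) as [Hp|Hz].
    - destruct (deriv_approx D t l (HD t Ht) 1 Rlt_0_1) as [d [Hd Hh]].
      exists (Rmin d (D t / (Rabs l + 1))). split.
      { apply Rmin_pos; auto. apply Rdiv_lt_0_compat; auto.
        pose proof (Rabs_pos l); lra. }
      intros s [Hs1 Hs2].
      assert (Hm1 := Rmin_l d (D t / (Rabs l + 1))).
      assert (Hm2 := Rmin_r d (D t / (Rabs l + 1))).
      specialize (Hh (s - t)).
      replace (t + (s - t)) with s in Hh by ring.
      rewrite (Rabs_pos_eq (s - t)) in Hh by lra.
      specialize (Hh ltac:(lra)).
      apply Rabs_le_between in Hh.
      assert (Hla := Rabs_pos l).
      assert (l * (s - t) >= - Rabs l * (s - t)).
      { destruct (Rle_dec 0 l). rewrite Rabs_pos_eq by lra; nra.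
        rewrite Rabs_left by lra; nra. }
      assert ((Rabs l + 1) * (s - t) < D t).
      { assert (s - t < D t / (Rabs l + 1)) by lra.
        apply Rmult_lt_compat_l with (r := Rabs l + 1) in H0; [|lra].
        field_simplify in H0; lra. }
      nra.
    - assert (Hg : g t = 0).
      { unfold g. fold (D t). rewrite <- Hz. ring. }
      assert (Hlp : 0 < l) by (unfold l; rewrite Hg; destruct (Hrpd t); lra).
      destruct (deriv_approx D t l (HD t Ht) (l/2) ltac:(lra)) as [d [Hd Hh]].
      exists d. split; auto. intros s [Hs1 Hs2].
      specialize (Hh (s - t)).
      replace (t + (s - t)) with s in Hh by ring.
      rewrite (Rabs_pos_eq (s - t)) in Hh by lra.
      specialize (Hh ltac:(lra)).
      apply Rabs_le_between in Hh. rewrite <- Hz in Hh. nra. }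
  assert (Hleft : forall t, v0 <= t -> D t = 0 ->
            exists d, 0 < d /\ forall s, t - d < s < t -> D s < 0).
  { intros t Ht Hz. set (l := g t - Derive rp t).
    assert (Hg : g t = 0).
    { unfold g. fold (D t). rewrite Hz. ring. }
    assert (Hlp : 0 < l) by (unfold l; rewrite Hg; destruct (Hrpd t); lra).
    destruct (deriv_approx D t l (HD t Ht) (l/2) ltac:(lra)) as [d [Hd Hh]].
    exists d. split; auto. intros s [Hs1 Hs2].
    specialize (Hh (s - t)).
    replace (t + (s - t)) with s in Hh by ring.
    rewrite (Rabs_left (s - t)) in Hh by lra.
    specialize (Hh ltac:(lra)).
    apply Rabs_le_between in Hh. rewrite Hz in Hh. nra. }
  assert (Hneg : forall t, v0 <= t -> D t < 0 ->
            exists d, 0 < d /\ forall s, Rabs (s - t) < d -> D s < 0).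
  { intros t Ht Hn.
    destruct (cont_eps D t (deriv_cont D t _ (HD t Ht)) (- D t) ltac:(lra)) as [d [Hd Hs]].
    exists d; split; auto. intros s Hst. specialize (Hs s Hst).
    apply Rabs_lt_between in Hs. lra. }
  assert (Hp1 : forall v, v0 < v -> 0 < D v).
  { intros v1 Hv1. destruct (Rlt_le_dec 0 (D v1)) as [ok|Hbad]; [exact ok|exfalso].
    set (E := fun t => v0 <= t <= v1 /\ forall s, v0 < s <= t -> 0 < D s).
    assert (Hb : bound E) by (exists v1; intros t [Ht _]; lra).
    assert (He : exists t, E t) by (exists v0; split; [lra| intros s Hs; lra]).
    destruct (completeness E Hb He) as [m [Hub Hlub]].
    assert (Hm0 : v0 <= m) by (apply Hub; split; [lra|intros s Hs; lra]).
    assert (Hm1 : m <= v1) by (apply Hlub; intros t [Ht _]; lra).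
    assert (HP : forall s, v0 < s < m -> 0 < D s).
    { intros s Hs. destruct (classic (exists t, E t /\ s <= t)) as [[t [[_ Ht] Hst]]|Hn].
      - apply Ht; lra.
      - exfalso. assert (m <= s).
        { apply Hlub. intros t Et. apply Rnot_lt_le. intro. apply Hn. exists t. split; auto; lra. }
        lra. }
    assert (HDm : 0 <= D m).
    { destruct (Req_dec m v0) as [->|Hne]. unfold D; lra.
      apply Rnot_lt_le; intro Hlt. destruct (Hneg m Hm0 Hlt) as [d [Hd Hs]].
      set (s := m - Rmin d (m - v0) / 2).
      assert (Hmin1 := Rmin_l d (m - v0)). assert (Hmin2 := Rmin_r d (m-v0)).
      assert (0 < Rmin d (m - v0)) by (apply Rmin_pos; lra).
      specialize (Hs s ltac:(unfold s; rewrite Rabs_left by lra; lra)).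
      specialize (HP s ltac:(unfold s; lra)). lra. }
    assert (HDm' : v0 < m -> 0 < D m).
    { intros Hlt. destruct (Rle_lt_or_eq_dec _ _ HDm) as [?|Hz]; auto.
      destruct (Hleft m Hm0 (eq_sym Hz)) as [d [Hd Hs]].
      set (s := m - Rmin d (m - v0) / 2).
      assert (Hmin1 := Rmin_l d (m - v0)). assert (Hmin2 := Rmin_r d (m-v0)).
      assert (0 < Rmin d (m - v0)) by (apply Rmin_pos; lra).
      specialize (Hs s ltac:(unfold s; lra)). specialize (HP s ltac:(unfold s; lra)). lra. }
    assert (Hmv1 : m < v1).
    { destruct (Rle_lt_or_eq_dec _ _ Hm1) as [?|Heq]; auto. subst m. specialize (HDm' Hv1). lra. }
    destruct (Hext m Hm0 HDm) as [d [Hd Hs]].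
    set (t' := m + Rmin d (v1 - m) / 2).
    assert (Hmin1 := Rmin_l d (v1 - m)). assert (Hmin2 := Rmin_r d (v1 - m)).
    assert (0 < Rmin d (v1 - m)) by (apply Rmin_pos; lra).
    assert (Et : E t').
    { split. unfold t'; lra. intros s Hs'. destruct (Rlt_le_dec m s) as [Hms|Hsm].
      apply Hs. unfold t' in Hs'; lra.
      destruct (Rle_lt_or_eq_dec _ _ Hsm) as [? | ->]. apply HP; lra. apply HDm'; lra. }
    specialize (Hub t' Et). unfold t' in Hub. lra. }
  split. { intros v Hv. specialize (Hp1 v Hv). unfold D in Hp1. lra. }
  assert (HDnn : forall v, v0 <= v -> 0 <= D v).
  { intros v Hv. destruct (Req_dec v v0) as [->|Hne]. unfold D; lra.
    apply Rlt_le, Hp1; lra. }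
  assert (Hgnn : forall v, v0 <= v -> 0 <= g v).
  { intros v Hv. specialize (HDnn v Hv). unfold D in HDnn. unfold g.
    assert (0 < hfun A F rc v (x v)).
    { apply Hhpos. specialize (Hrmp v). specialize (Hrm v). lra. }
    assert (0 < x v - (rm v - rc)) by (specialize (Hrmp v); lra).
    apply Rmult_le_pos; [|lra]. apply Rmult_le_pos; [|lra].
    apply Rmult_le_pos; lra. }
  assert (Hxmono : forall a b, v0 <= a -> a <= b -> x a <= x b).
  { intros a b Ha Hab. destruct (mvt x g a b Hab) as [c [Hc Heq]].
    intros t Ht; apply Hgeo; lra.
    specialize (Hgnn c ltac:(lra)). nra. }
  assert (Hrpmono : forall a b, a <= b -> rp b <= rp a).
  { intros a b Hab. destruct (mvt rp (Derive rp) a b Hab) as [c [Hc Heq]].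
    intros t Ht; apply Derive_correct, Hrpd.
    destruct (Hrpd c). nra. }
  assert (Hhc : forall y, continuity_pt hinf y).
  { intro y. unfold continuity_pt, continue_in, limit1_in, limit_in.
    intros eps He. simpl. unfold R_dist.
    destruct (Hhunif (y-1) (y+1) (eps/3) ltac:(lra)) as [V HV].
    assert (Hcy : continuity_pt (hfun A F rc V) y).
    { apply ex_deriv_cont. unfold hfun.
      apply (ex_derive_mult (fun y => A V (y + rc)) (fun y => F V (y + rc))).
      - apply (ex_derive_comp (fun s => A V s) (fun y => y + rc)).
        exact (HAsm V 1%nat (y + rc)).
        auto_derive; auto.
      - apply (ex_derive_comp (fun s => F V s) (fun y => y + rc)).
        exact (HFsm V 1%nat (y + rc)).
        auto_derive; auto. }
    destruct (cont_eps _ _ Hcy (eps/3) ltac:(lra)) as [d [Hd Hs]].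
    exists (Rmin d 1). split. apply Rmin_pos; lra.
    intros z [_ Hz].
    assert (Hm1 := Rmin_l d 1). assert (Hm2 := Rmin_r d 1).
    specialize (Hs z ltac:(lra)).
    assert (Hz' : y - 1 <= z <= y + 1) by (apply Rabs_lt_between in Hz; lra).
    assert (H1 := HV V z (Rle_refl V) Hz').
    assert (H2 := HV V y (Rle_refl V) ltac:(lra)).
    apply Rabs_lt_between in Hs. apply Rabs_lt_between in H1.
    apply Rabs_lt_between in H2. apply Rabs_lt_between. lra. }
  set (v1 := v0 + 1).
  set (a := x v1).
  assert (Hav1 : 0 < D v1) by (apply Hp1; unfold v1; lra).
  assert (Ha : - rc < a).
  { unfold a. unfold D in Hav1. specialize (Hrmp v1). specialize (Hrm v1). lra. }
  assert (HDv : forall v, v1 <= v -> D v1 <= D v /\ D v1 <= x v - (rm v - rc)).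
  { intros v Hv. assert (H1 := Hxmono v1 v ltac:(unfold v1; lra) Hv).
    assert (H2 := Hrpmono v1 v Hv). specialize (Hrmp v). unfold D. lra. }
  apply is_lim_spec. intros M. simpl.
  destruct (classic (exists N, forall y, N < y -> M < x y)) as [ok|Hn]; [exact ok|exfalso].
  assert (HB : forall v, v0 <= v -> x v <= M).
  { intros v Hv. apply Rnot_lt_le. intro Hlt. apply Hn. exists v.
    intros y Hy. specialize (Hxmono v y Hv ltac:(lra)). lra. }
  assert (HaM : a <= M) by (apply HB; unfold v1; lra).
  destruct (continuity_ab_min hinf a M HaM (fun c _ => Hhc c)) as [mx [Hmx Hmxr]].
  assert (Hpm : 0 < hinf mx) by (apply Hhinfpos; lra).
  set (c1 := hinf mx / 2).
  assert (Hc1 : 0 < c1) by (unfold c1; lra).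
  destruct (Hhunif a M c1 Hc1) as [V HV].
  set (W := Rmax v1 V).
  assert (HW1 : v1 <= W) by apply Rmax_l. assert (HW2 : V <= W) by apply Rmax_r.
  set (k := / 2 * c1 * D v1 * D v1).
  assert (Hk : 0 < k).
  { unfold k, c1. apply Rmult_lt_0_compat; [|lra].
    apply Rmult_lt_0_compat; [|lra]. apply Rmult_lt_0_compat; lra. }
  assert (Hgk : forall v, W <= v -> k <= g v).
  { intros v Hv. assert (Hv1 : v1 <= v) by lra. destruct (HDv v Hv1) as [E1 E2].
    assert (Hxr : a <= x v <= M).
    { split. apply Hxmono; unfold v1 in *; lra. apply HB; unfold v1 in *; lra. }
    assert (Hh1 := HV v (x v) ltac:(lra) Hxr).
    apply Rabs_lt_between in Hh1.
    assert (Hh2 := Hmx (x v) Hxr).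
    assert (Hh : c1 <= hfun A F rc v (x v)) by (unfold c1 in *; lra).
    unfold g, k. fold (D v).
    assert (0 < c1) by (unfold c1; lra).
    assert (P1 : c1 * D v1 <= hfun A F rc v (x v) * D v)
      by (apply Rmult_le_compat; lra).
    assert (P2 : c1 * D v1 * D v1 <= hfun A F rc v (x v) * D v * (x v - (rm v - rc))).
    { apply Rmult_le_compat; try lra. apply Rmult_le_pos; lra. }
    rewrite !Rmult_assoc. apply Rmult_le_compat_l. lra.
    rewrite <- !Rmult_assoc. exact P2. }
  set (v := W + (M - x W) / k + 1).
  assert (HxW : x W <= M) by (apply HB; unfold v1 in *; lra).
  assert (Hvw : W <= v).
  { unfold v. assert (0 <= (M - x W) / k) by (apply Rdiv_le_0_compat; lra). lra. }
  destruct (mvt x g W v Hvw) as [c [Hc Heq]].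
  { intros t Ht. apply Hgeo. unfold v1 in *; lra. }
  assert (Hgc := Hgk c ltac:(lra)).
  assert (HxvM := HB v ltac:(unfold v1 in *; lra)).
  assert (k * (v - W) = M - x W + k) by (unfold v; field; lra).
  nra.
Qed.
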